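(* For the hypercube cluster labeling task $\mathrm{Learn}(n,N,q_{HC},\pi)$, $$I(X_S;P\mid K)\le\mu_1 n\cdot\rho d+\mu_1 n\log N.$$
   Context: Learning task $\mathrm{Learn}(n,N,q_c,\pi)$: a problem instance $P=(D,C)$ with $C=(C_1,\dots,C_N)$ i.i.d. from $q_c$ and $D(j)=\delta_j/\sum_i\delta_i$, $\delta_j$ i.i.d. uniform over entries of the list $\pi$; data set $X$ of $n$ i.i.d. examples, each drawn by picking $j\sim D$ then sampling from subpopulation $j$. $X_S$ is the set of singletons (unique representatives of their subpopulation in $X$), $K=|X_S|$, $\mu_1=\mathbb E[K]/n$. Component distribution $q_{HC}$ (dimension $d$, parameter $\rho$): subpopulation $j$ has $\mathcal I_j\subseteq[d]$ containing each index independently w.p. $\rho$ and uniform bits $b_j(i)$, $i\in\mathcal I_j$; an example from $j$ is $z\in\{0,1\}^d$ with $z(i)=b_j(i)$ on $\mathcal I_j$ and independent uniform bits elsewhere, labeled $j$. Logs base 2. *)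

(* Defs.v *)
From HB Require Import structures.
From mathcomp Require Import all_boot all_order all_algebra.
From mathcomp Require Import reals exp.
Set Implicit Arguments. Unset Strict Implicit. Unset Printing Implicit Defensive.
Import Order.TTheory GRing.Theory Num.Theory.
Local Open Scope ring_scope.

Section Info.
Variable R : realType.

Definition log2 (x : R) : R := ln x / ln 2.

Definition prob_eq (Om : finType) (p : Om -> R) (A : eqType) (X : Om -> A) (a : A)
  : R := \sum_(w | X w == a) p w.

Definition cond_mutual_info (Om : finType) (p : Om -> R) (A B C : eqType)
  (X : Om -> A) (Y : Om -> B) (Z : Om -> C) : R :=
  \sum_w p w *
    log2 ((prob_eq p (fun v => (X v, Y v, Z v)) (X w, Y w, Z w) * prob_eq p Z (Z w))
          / (prob_eq p (fun v => (X v, Z v)) (X w, Z w)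
             * prob_eq p (fun v => (Y v, Z v)) (Y w, Z w))).

Definition expect (Om : finType) (p : Om -> R) (f : Om -> R) : R :=
  \sum_w p w * f w.
End Info.

(* Raw sample space of Learn(n,N,q_HC,pi), with m = size pi:
   - for each subpopulation j : 'I_N, an index into pi (delta_j = pi_(index));
   - for each j, the set I_j of fixed coordinates and a uniform bit vector
     b_j on all of [d] (only its restriction to I_j is used / observable);
   - for each example t : 'I_n, its subpopulation label j_t and a uniform
     noise vector u_t in {0,1}^d (used on coordinates outside I_{j_t}). *)
Definition HCOmega (N d n m : nat) :=
  ({ffun 'I_N -> 'I_m} * {ffun 'I_N -> {set 'I_d} * {ffun 'I_d -> bool}}
   * {ffun 'I_n -> 'I_N * {ffun 'I_d -> bool}})%type.

Section HC.
Variables (R : realType) (n N d : nat) (rho : R) (pi : seq R).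
Local Notation m := (size pi).
Local Notation Om := (HCOmega N d n m).

Definition hc_delta (w : Om) (j : 'I_N) : R := nth 0 pi (w.1.1 j).
Definition hc_D (w : Om) (j : 'I_N) : R := hc_delta w j / \sum_i hc_delta w i.
Definition hc_I (w : Om) (j : 'I_N) : {set 'I_d} := (w.1.2 j).1.
Definition hc_b (w : Om) (j : 'I_N) : {ffun 'I_d -> bool} := (w.1.2 j).2.
Definition hc_label (w : Om) (t : 'I_n) : 'I_N := (w.2 t).1.
Definition hc_noise (w : Om) (t : 'I_n) : {ffun 'I_d -> bool} := (w.2 t).2.

Definition hc_z (w : Om) (t : 'I_n) : {ffun 'I_d -> bool} :=
  [ffun i => if i \in hc_I w (hc_label w t) then hc_b w (hc_label w t) i
             else hc_noise w t i].

Definition hc_ex (w : Om) (t : 'I_n) : {ffun 'I_d -> bool} * 'I_N :=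
  (hc_z w t, hc_label w t).

Definition hc_mass (w : Om) : R :=
  (m%:R^-1) ^+ N
  * (\prod_(j : 'I_N) (rho ^+ #|hc_I w j| * (1 - rho) ^+ (d - #|hc_I w j|)
                        * (2^-1) ^+ d))
  * (\prod_(t : 'I_n) (hc_D w (hc_label w t) * (2^-1) ^+ d)).

Definition hc_P (w : Om) :
  ({ffun 'I_N -> R} * {ffun 'I_N -> {set 'I_d} * {ffun 'I_d -> bool}})%type :=
  ([ffun j => hc_D w j],
   [ffun j => (hc_I w j, [ffun i => (i \in hc_I w j) && hc_b w j i])]).

Definition hc_XS (w : Om) : {set {ffun 'I_d -> bool} * 'I_N} :=
  [set hc_ex w t | t in [pred t : 'I_n |
     #|[set t' : 'I_n | hc_label w t' == hc_label w t]| == 1%N]].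

Definition hc_K (w : Om) : nat := #|hc_XS w|.

Definition hc_mu1 : R := expect hc_mass (fun w => (hc_K w)%:R) / n%:R.
End HC.

(* Main.v *)
Require Import Defs.
From HB Require Import structures.
From mathcomp Require Import all_boot all_order all_algebra.
From mathcomp Require Import reals exp.
From mathcomp Require Import ring lra.
Set Implicit Arguments. Unset Strict Implicit. Unset Printing Implicit Defensive.
Import Order.TTheory GRing.Theory Num.Theory.
Local Open Scope ring_scope.

Section Gen.
Variable R : realType.
Variable Om : finType.
Variable p : Om -> R.
Hypothesis p0 : forall w, 0 <= p w.

Lemma prob_ge (A : eqType) (V : Om -> A) w : p w <= prob_eq p V (V w).
Proof.
rewrite /prob_eq (bigD1 w) //= lerDl; apply: sumr_ge0 => v _; exact: p0.
Qed.

Lemma prob_ge0 (A : eqType) (V : Om -> A) a : 0 <= prob_eq p V a.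
Proof. by apply: sumr_ge0 => v _; exact: p0. Qed.

Lemma group_le (U : finType) (V : Om -> U) (H : U -> R) :
  (forall u, 0 <= H u) ->
  \sum_w p w * (H (V w) / prob_eq p V (V w)) <= \sum_u H u.
Proof.
move=> H0.
rewrite (partition_big V xpredT) //=; apply: ler_sum => u _.
rewrite (eq_bigr (fun w => p w * (H u / prob_eq p V u))); last first.
  by move=> w /eqP ->.
rewrite -big_distrl /= -/(prob_eq p V u) mulrC -mulrA.
have [->|nz] := eqVneq (prob_eq p V u) 0; first by rewrite invr0 !mulr0.
by rewrite mulVf // mulr1.
Qed.

Lemma log2_le_sub (x : R) : 0 < x -> log2 x <= (x - 1) / ln 2.
Proof.
move=> x0; rewrite /log2 ler_pM2r; last by rewrite invr_gt0 ln_gt0 // ltr1n.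
have := @le_ln1Dx R (x - 1); rewrite (_ : 1 + (x - 1) = x); last by rewrite addrC subrK.
apply.
by rewrite ltrBrDl addrN.
Qed.

End Gen.

Section HCP.
Variables (R : realType) (n N d : nat) (rho : R) (pi : seq R).
Local Notation m := (size pi).
Local Notation Om := (HCOmega N d n m).
Local Notation T := ({ffun 'I_d -> bool} * 'I_N)%type.
Local Notation p := (@hc_mass R n N d rho pi).
Local Notation X := (@hc_XS R n N d pi).
Local Notation Y := (@hc_P R n N d pi).
Local Notation Z := (@hc_K R n N d pi).
Local Notation lab := (@hc_label R n N d pi).
Local Notation II := (@hc_I R n N d pi).

Implicit Types f : {ffun 'I_N -> {ffun 'I_d -> bool}}.
Definition flip f (w : Om) : Om :=
  (w.1, [ffun t => ((w.2 t).1, [ffun i => (w.2 t).2 i (+) f (w.2 t).1 i])]).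

Lemma flipK f : involutive (flip f).
Proof.
move=> [a e]; rewrite /flip /=; congr (_, _); apply/ffunP => t; rewrite !ffunE /=.
case: (e t) => j z /=; congr (_, _); apply/ffunP => i; rewrite !ffunE.
by rewrite -addbA addbb addbF.
Qed.

Lemma lab_flip f w t : lab (flip f w) t = lab w t.
Proof. by rewrite /hc_label /flip ffunE. Qed.

Lemma mass_flip f w : p (flip f w) = p w.
Proof.
rewrite /hc_mass; congr (_ * _); apply: eq_bigr => t _.
by rewrite lab_flip.
Qed.

Definition gact (f : {ffun 'I_N -> {ffun 'I_d -> bool}}) (e : T) : T :=
  ([ffun i => e.1 i (+) f e.2 i], e.2).

Lemma gactK f : involutive (gact f).
Proof.
move=> [z j]; rewrite /gact /=; congr (_, _); apply/ffunP => i; rewrite !ffunE.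
by rewrite -addbA addbb addbF.
Qed.

Definition act f (S : {set T}) : {set T} := gact f @: S.

Lemma actK f : involutive (act f).
Proof.
move=> S; rewrite /act -imset_comp.
rewrite (eq_imset (g := id)); first exact: imset_id.
by move=> e; rewrite /= gactK.
Qed.

Lemma act_inj f : injective (act f).
Proof. exact: inv_inj (actK f). Qed.

Lemma card_act f S : #|act f S| = #|S|.
Proof. by rewrite card_imset //; exact: inv_inj (gactK f). Qed.

Lemma XS_flip f w : (forall j i, i \in II w j -> f j i = false) ->
  X (flip f w) = act f (X w).
Proof.
move=> Hf; rewrite /act /hc_XS -imset_comp; apply/setP => e.
apply/imsetP/imsetP => -[t Ht ->]; exists t.
- move: Ht; rewrite !inE /=.
  set A := finset _; set B := finset _; suff -> : A = B by [].
  by apply/setP => t'; rewrite !inE !lab_flip.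
- by rewrite /hc_ex /gact /= lab_flip; congr (_, _); apply/ffunP => i;
  rewrite /hc_z !ffunE /hc_I /hc_b /hc_noise /= lab_flip /hc_label /flip /= !ffunE /=;
  case: ifP => Hi //=; rewrite ?Hf ?addbF //.
- move: Ht; rewrite !inE /=.
  set A := finset _; set B := finset _; suff -> : A = B by [].
  by apply/setP => t'; rewrite !inE !lab_flip.
- by rewrite /hc_ex /gact /= lab_flip; congr (_, _); apply/ffunP => i;
  rewrite /hc_z !ffunE /hc_I /hc_b /hc_noise /= lab_flip /hc_label /flip /= !ffunE /=;
  case: ifP => Hi //=; rewrite ?Hf ?addbF //.
Qed.


Definition Lw w : {set 'I_N} := [set e.2 | e in X w].

Lemma XS_uniq w e e' : e \in X w -> e' \in X w -> e.2 = e'.2 -> e = e'.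
Proof.
move=> /imsetP [t Ht ->] /imsetP [t' Ht' ->] /= Hl.
move: Ht; rewrite inE /= => /cards1P [x Hx].
have : t \in [set t'' | lab w t'' == lab w t] by rewrite inE.
have : t' \in [set t'' | lab w t'' == lab w t] by rewrite inE -Hl.
by rewrite Hx !inE => /eqP -> /eqP ->.
Qed.

Lemma Z_Lw w : Z w = #|Lw w|.
Proof.
rewrite /Lw card_in_imset //.
move=> e e' He He' H; exact: XS_uniq He He' H.
Qed.

Lemma Lw_mem w j : (j \in Lw w) = (#|[set t | lab w t == j]| == 1%N).
Proof.
apply/imsetP/idP.
- move=> [e /imsetP [t Ht ->] ->]; move: Ht; by rewrite inE.
- move=> /cards1P [t Ht].
  have : t \in [set t | lab w t == j] by rewrite Ht inE.
  rewrite inE => /eqP Hj.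
  exists (hc_ex w t); last by rewrite /hc_ex /= Hj.
  apply/imsetP; exists t => //; rewrite inE /= Hj Ht cards1 //.
Qed.


Lemma II_Y v j : II v j = ((Y v).2 j).1.
Proof. by rewrite /hc_P ffunE. Qed.

Hypothesis p0 : forall w, 0 <= p w.

Lemma triple_eq (A B C : eqType) (a a' : A) (b b' : B) (c c' : C) :
  ((a, b, c) == (a', b', c')) = [&& a == a', b == b' & c == c'].
Proof. by rewrite !xpair_eqE andbA. Qed.
Lemma pair_eqE2 (A B : eqType) (a a' : A) (b b' : B) :
  ((a, b) == (a', b')) = (a == a') && (b == b').
Proof. by rewrite xpair_eqE. Qed.

Section Count.
Variable w0 : Om.
Local Notation x := (X w0).
Local Notation y := (Y w0).
Local Notation k := (Z w0).
Definition XYZ v := (X v, Y v, Z v).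
Definition YZ v := (Y v, Z v).

Definition Cset : {set 'I_N * 'I_d} :=
  [set ji | (ji.1 \in Lw w0) && (ji.2 \notin II w0 ji.1)].
Definition Fset : {set {ffun 'I_N -> {ffun 'I_d -> bool}}} :=
  [set f : {ffun 'I_N -> {ffun 'I_d -> bool}} | [forall j, [forall i, f j i ==> ((j, i) \in Cset)]]].

Lemma F_card : (2 ^ #|Cset| <= #|Fset|)%N.
Proof.
rewrite -card_powerset.
pose mk (S : {set 'I_N * 'I_d}) : {ffun 'I_N -> {ffun 'I_d -> bool}} :=
  [ffun j => [ffun i => (j, i) \in S]].
have mk_inj : injective mk.
  move=> S S' H; apply/setP => -[j i].
  have := congr1 (fun f : {ffun 'I_N -> {ffun 'I_d -> bool}} => f j i) H; by rewrite /mk !ffunE.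
rewrite -(card_imset _ mk_inj); apply: subset_leq_card; apply/subsetP => f.
move=> /imsetP [S]; rewrite inE => /subsetP HS ->.
rewrite inE; apply/forallP => j; apply/forallP => i; rewrite /mk !ffunE.
by apply/implyP => /HS.
Qed.

Lemma F_ok f : f \in Fset -> forall v, Y v = y -> forall j i, i \in II v j -> f j i = false.
Proof.
rewrite inE => /forallP Hf v Hv j i; rewrite II_Y Hv -II_Y => Hi.
apply/negP => Hji; have := implyP (forallP (Hf j) i) Hji.
by rewrite inE /= Hi andbF.
Qed.

Lemma prob_act f : f \in Fset ->
  prob_eq p XYZ (act f x, y, k) = prob_eq p XYZ (x, y, k).
Proof.
move=> fF; rewrite /prob_eq (reindex_inj (inv_inj (flipK f))) /=.
apply: eq_big => v; last by rewrite mass_flip.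
rewrite /XYZ triple_eq [in RHS]triple_eq.
case: (eqVneq (Y v) y) => Hy; last by rewrite !andbF.
have HX : X (flip f v) = act f (X v) by apply: XS_flip; exact: F_ok.
rewrite /hc_K HX card_act (inj_eq (@act_inj f)) //.
Qed.

Lemma act_injF f g : f \in Fset -> g \in Fset -> act f x = act g x -> f = g.
Proof.
move=> fF gF H; apply/ffunP => j; apply/ffunP => i.
case: (boolP (j \in Lw w0)) => Hj.
- move: Hj => /imsetP [e He ->].
  have : gact f e \in act g x by rewrite -H; apply/imsetP; exists e.
  move=> /imsetP [e' He' Hee'].
  have Hsnd : e.2 = e'.2 by move: Hee'; rewrite /gact; case.
  have Ee : e = e' := XS_uniq He He' Hsnd.
  rewrite -Ee in Hee'; have := congr1 (fun e : T => e.1 i) Hee'; rewrite /gact /= !ffunE.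
  by case: (e.1 i); case: (f e.2 i); case: (g e.2 i).
- move: fF gF; rewrite !inE => /forallP Hf /forallP Hg.
  have := implyP (forallP (Hf j) i); have := implyP (forallP (Hg j) i).
  rewrite inE /= (negbTE Hj) /=.
  move=> Hgi Hfi; have -> : f j i = false by apply/negP => /Hfi.
  by have -> : g j i = false by apply/negP => /Hgi.
Qed.

Lemma sum_F : \sum_(f in Fset) prob_eq p XYZ (act f x, y, k) <= prob_eq p YZ (y, k).
Proof.
rewrite /prob_eq.
under eq_bigr do rewrite big_mkcond /=.
rewrite exchange_big /= [X in _ <= X]big_mkcond /=; apply: ler_sum => v _.
case: (pickP [pred f in Fset | X v == act f x]) => [f0 /andP [f0F /eqP Hf0]|Hn].
- rewrite (bigD1 f0) //= big1 ?addr0.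
    case: ifP => [/eqP H|_].
      by rewrite (_ : YZ v = (y, k)) ?eqxx //; exact: (congr1 (fun t => (t.1.2, t.2)) H).
    by case: ifP => _; [exact: p0 | exact: lexx].
  move=> f /andP [fF nf]; case: ifP => // /eqP H.
  have Hx : X v = act f x := congr1 (fun t => t.1.1) H.
  case/eqP: nf; apply: act_injF => //; by rewrite -Hx -Hf0.
- rewrite big1; first by case: ifP => _; [exact: p0 | exact: lexx].
  move=> f fF; case: ifP => // /eqP H.
  have Hx : X v = act f x := congr1 (fun t => t.1.1) H.
  by have := Hn f; rewrite /= fF Hx eqxx.
Qed.

Lemma count_main : prob_eq p XYZ (x, y, k) * (2 ^ #|Cset|)%:R <= prob_eq p YZ (y, k).
Proof.
apply: le_trans (sum_F).
rewrite (eq_bigr (fun _ => prob_eq p XYZ (x, y, k))); last by move=> f fF; rewrite prob_act.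
rewrite sumr_const mulr_natr; apply: ler_wpMn2l; first exact: (prob_ge0 p0).
exact: F_card.
Qed.

Lemma card_Cset : (#|Cset| + \sum_(j in Lw w0) #|II w0 j| = #|Lw w0| * d)%N.
Proof.
rewrite -sum1_card.
rewrite (eq_bigl (fun ji => (ji.1 \in Lw w0) && (ji.2 \notin II w0 ji.1))); last by move=> ji; rewrite inE.
rewrite -(pair_big_dep (fun j => j \in Lw w0) (fun j i => i \notin II w0 j) (fun _ _ => 1%N)) /=.
rewrite -big_split /= -sum_nat_const; apply: eq_bigr => j _.
rewrite sum1_card addnC.
rewrite -[RHS](card_ord d) -(cardC (mem (II w0 j))); congr (_ + _)%N; apply: eq_card => i; by rewrite !inE.
Qed.

End Count.

End HCP.

Section Indep.
Variables (R : realType) (n N d : nat) (rho : R) (pi : seq R).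
Local Notation m := (size pi).
Local Notation Om := (HCOmega N d n m).
Local Notation p := (@hc_mass R n N d rho pi).
Local Notation IBT := {ffun 'I_N -> {set 'I_d} * {ffun 'I_d -> bool}}.
Local Notation AT := {ffun 'I_N -> 'I_m}.
Local Notation ET := {ffun 'I_n -> 'I_N * {ffun 'I_d -> bool}}.

Definition beta (y : {set 'I_d} * {ffun 'I_d -> bool}) : R :=
  rho ^+ #|y.1| * (1 - rho) ^+ (d - #|y.1|) * (2^-1) ^+ d.
Definition Bm (ib : IBT) : R := \prod_j beta (ib j).
Definition Am (a : AT) (e : ET) : R :=
  (m%:R^-1) ^+ N * \prod_(t : 'I_n) (nth 0 pi (a (e t).1) / (\sum_i nth 0 pi (a i)) * (2^-1) ^+ d).

Lemma mass_split (w : Om) : p w = Bm w.1.2 * Am w.1.1 w.2.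
Proof.
by rewrite /hc_mass /Bm /Am /beta mulrAC mulrC.
Qed.

Lemma indep (G : AT -> ET -> R) (H : IBT -> R) :
  \sum_(w : Om) p w * (G w.1.1 w.2 * H w.1.2) =
  (\sum_ib Bm ib * H ib) * (\sum_a \sum_e Am a e * G a e).
Proof.
have -> : \sum_(w : Om) p w * (G w.1.1 w.2 * H w.1.2) =
   \sum_(ai : AT * IBT) \sum_(e : ET) Bm ai.2 * Am ai.1 e * (G ai.1 e * H ai.2).
  rewrite (pair_bigA _ (fun (ai : AT * IBT) (e : ET) => Bm ai.2 * Am ai.1 e * (G ai.1 e * H ai.2))).
  by apply: eq_bigr => -[ai e] _; rewrite mass_split.
rewrite -(pair_bigA _ (fun (a : AT) (ib : IBT) => \sum_(e : ET) Bm ib * Am a e * (G a e * H ib))) /=.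
rewrite big_distrl /= exchange_big /=; apply: eq_bigr => a _.
rewrite big_distrr /=; apply: eq_bigr => ib _; rewrite big_distrr /=.
apply: eq_bigr => e _; ring.
Qed.

Lemma pw_prod (J : {set 'I_d}) :
  \prod_(i : 'I_d) (if i \in J then rho else 1 - rho) = rho ^+ #|J| * (1 - rho) ^+ (d - #|J|).
Proof.
rewrite (bigID (mem J)) /=; congr (_ * _).
  by rewrite (eq_bigr (fun _ => rho)) ?prodr_const // => i ->.
rewrite (eq_bigr (fun _ => 1 - rho)); last by move=> i /negbTE ->.
rewrite prodr_const; congr (_ ^+ _).
have E : (#|J| + #|~: J| = d)%N by rewrite cardsC card_ord.
rewrite -[X in (X - _)%N]E addKn; apply: eq_card => i; by rewrite !inE.
Qed.

Lemma binsum (c : 'I_d -> R) :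
  \sum_(J : {set 'I_d}) \prod_(i : 'I_d) (if i \in J then rho else c i) =
  \prod_(i : 'I_d) (rho + c i).
Proof. by rewrite bigA_distr. Qed.

Lemma binsum1 : \sum_(J : {set 'I_d}) rho ^+ #|J| * (1 - rho) ^+ (d - #|J|) = 1.
Proof.
rewrite (eq_bigr (fun J : {set 'I_d} => \prod_(i : 'I_d) (if i \in J then rho else 1 - rho))).
  by rewrite binsum big1 // => i _; rewrite addrC subrK.
by move=> J _; rewrite pw_prod.
Qed.

Lemma binsumI : \sum_(J : {set 'I_d}) rho ^+ #|J| * (1 - rho) ^+ (d - #|J|) * #|J|%:R
  = rho * d%:R.
Proof.
rewrite (eq_bigr (fun J : {set 'I_d} => \sum_(i : 'I_d) rho ^+ #|J| * (1 - rho) ^+ (d - #|J|) * (i \in J)%:R)); last first.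
  move=> J _; rewrite -big_distrr /=; congr (_ * _).
  by rewrite -sum1_card natr_sum big_mkcond; apply: eq_bigr => i _; case: (i \in J).
rewrite exchange_big /= mulr_natr -[d in rho *+ d]card_ord -sumr_const.
apply: eq_bigr => i0 _.
rewrite (eq_bigr (fun J : {set 'I_d} => \prod_(i : 'I_d) (if i \in J then rho else
                              (if i == i0 then 0 else 1 - rho)))).
  rewrite binsum (bigD1 i0) //= eqxx addr0 big1 ?mulr1 //.
  by move=> i /negbTE ->; rewrite addrC subrK.
move=> J _; rewrite -(pw_prod J); case: (boolP (i0 \in J)) => Hi0.
  rewrite mulr1n mulr1; apply: eq_bigr => i _; case: ifP => // Hi.
  by case: eqP => // E; rewrite E Hi0 in Hi.
by rewrite mulr0n mulr0 (bigD1 i0) //= (negbTE Hi0) eqxx mul0r.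
Qed.

Lemma sumbeta (c : {set 'I_d} -> R) :
  \sum_y beta y * c y.1 = \sum_(J : {set 'I_d}) rho ^+ #|J| * (1 - rho) ^+ (d - #|J|) * c J.
Proof.
rewrite -(pair_bigA _ (fun J b => beta (J, b) * c J)) /=; apply: eq_bigr => J _.
rewrite (eq_bigr (fun _ => rho ^+ #|J| * (1 - rho) ^+ (d - #|J|) * (2^-1) ^+ d * c J)) //.
have Hc : #|{ffun 'I_d -> bool}| = (2 ^ d)%N by rewrite card_ffun card_bool card_ord.
have H3 : (2^-1 : R) ^+ d *+ (2 ^ d)%N = 1.
  by rewrite -mulr_natr natrX -exprMn mulVf ?expr1n // pnatr_eq0.
by rewrite sumr_const Hc mulrAC -mulrnAr H3 mulr1.
Qed.

Lemma sumBm (cj : 'I_N -> {set 'I_d} -> R) :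
  \sum_(ib : IBT) \prod_j (beta (ib j) * cj j (ib j).1) =
  \prod_j \sum_(J : {set 'I_d}) rho ^+ #|J| * (1 - rho) ^+ (d - #|J|) * cj j J.
Proof.
rewrite -(bigA_distr_bigA (fun j y => beta y * cj j y.1)) /=.
by apply: eq_bigr => j _; rewrite sumbeta.
Qed.

Lemma sumBm1 : \sum_(ib : IBT) Bm ib * 1 = 1.
Proof.
rewrite (eq_bigr (fun ib : IBT => \prod_j (beta (ib j) * (fun _ _ => 1) j (ib j).1))).
  by rewrite (sumBm (fun _ _ => 1)) big1 // => j _; rewrite -[RHS]binsum1; apply: eq_bigr => J _ /=; rewrite mulr1.
by move=> ib _; rewrite mulr1 /Bm; apply: eq_bigr => j _; rewrite mulr1.
Qed.

Lemma sumBmI j0 : \sum_(ib : IBT) Bm ib * #|(ib j0).1|%:R = rho * d%:R.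
Proof.
rewrite (eq_bigr (fun ib : IBT => \prod_j (beta (ib j) *
            (fun j J => if j == j0 then #|J|%:R else 1) j (ib j).1))).
  rewrite (sumBm (fun j J => if j == j0 then #|J|%:R else 1)) (bigD1 j0) //= eqxx binsumI big1 ?mulr1 // => j /negbTE ->.
  by rewrite -[RHS]binsum1; apply: eq_bigr => J _ /=; rewrite mulr1.
move=> ib _; rewrite big_split /= /Bm; congr (_ * _).
by rewrite (bigD1 j0) //= eqxx big1 ?mulr1 // => j /negbTE ->.
Qed.

Lemma indepI (G : AT -> ET -> R) j0 :
  \sum_(w : Om) p w * (G w.1.1 w.2 * #|(w.1.2 j0).1|%:R) =
  rho * d%:R * \sum_(w : Om) p w * (G w.1.1 w.2 * 1).
Proof.
rewrite (indep G (fun ib => #|(ib j0).1|%:R)) (indep G (fun _ => 1)).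
by rewrite sumBmI sumBm1 mul1r.
Qed.

End Indep.

Section Final.
Variables (R : realType) (n N d : nat) (rho : R) (pi : seq R).
Hypotheses (HN : (0 < N)%N) (Hm : (0 < size pi)%N) (Hpi : all (fun x => 0 < x) pi).
Hypothesis (Hrho : 0 <= rho <= 1).
Local Notation m := (size pi).
Local Notation Om := (HCOmega N d n m).
Local Notation T := ({ffun 'I_d -> bool} * 'I_N)%type.
Local Notation p := (@hc_mass R n N d rho pi).
Local Notation X := (@hc_XS R n N d pi).
Local Notation Y := (@hc_P R n N d pi).
Local Notation Z := (@hc_K R n N d pi).
Local Notation II := (@hc_I R n N d pi).

Lemma mass_ge0 w : 0 <= p w.
Proof.
case/andP: Hrho => r0 r1.
have h2 : 0 <= (2^-1 : R) by rewrite invr_ge0 ler0n.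
rewrite /hc_mass; apply: mulr_ge0; first apply: mulr_ge0.
- by apply: exprn_ge0; rewrite invr_ge0 ler0n.
- apply: prodr_ge0 => j _; apply: mulr_ge0; last exact: exprn_ge0.
  by apply: mulr_ge0; apply: exprn_ge0 => //; rewrite subr_ge0.
- apply: prodr_ge0 => t _; apply: mulr_ge0; last exact: exprn_ge0.
  have dl : forall j, 0 <= hc_delta w j.
    move=> j; rewrite /hc_delta; apply: ltW.
    by have := (all_nthP 0 Hpi) (w.1.1 j) (ltn_ord _).
  by rewrite /hc_D; apply: divr_ge0 => //; apply: sumr_ge0 => i _.
Qed.

Let p0 := mass_ge0.

Definition MM := (2 ^ d * N)%N.

Lemma card_T : #|{: T}| = MM.
Proof.
by rewrite card_prod card_ffun card_bool !card_ord.
Qed.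

Lemma Z_le w : (Z w <= MM)%N.
Proof. by rewrite -card_T; apply: max_card. Qed.

Lemma Z_le_n w : (Z w <= n)%N.
Proof.
rewrite /hc_K /hc_XS; apply: leq_trans (leq_imset_card _ _) _.
by rewrite -[n in (_ <= n)%N]card_ord; apply: max_card.
Qed.

Definition HH (S : {set T}) : R := prob_eq p Z #|S| / ('C(MM, #|S|))%:R.

Lemma sum_HH : \sum_(S : {set T}) HH S = \sum_w p w.
Proof.
rewrite /HH /prob_eq.
under eq_bigr => S _ do rewrite big_distrl /= big_mkcond /=.
rewrite exchange_big /=; apply: eq_bigr => v _.
rewrite (eq_bigr (fun S : {set T} => if S \in [set S : {set T} | #|S| == Z v]
                    then p v / ('C(MM, Z v))%:R else 0)); last first.
  by move=> S _; rewrite inE eq_sym; case: eqP => // ->.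
rewrite -big_mkcond /= sumr_const card_draws card_T -(mulr_natr (p v / _)) divfK //.
by rewrite pnatr_eq0 -lt0n bin_gt0 Z_le.
Qed.

Lemma Cc_eq w : prob_eq p (fun v => (X v, Z v)) (X w, Z w) = prob_eq p X (X w).
Proof.
apply: eq_bigl => v; rewrite pair_eqE2.
by apply: andb_idr => /eqP E; rewrite /hc_K E.
Qed.

Definition qq w : R := (('C(MM, Z w))%:R)^-1.

Lemma gibbs : \sum_w p w * log2 (prob_eq p Z (Z w) * qq w /
                 prob_eq p (fun v => (X v, Z v)) (X w, Z w)) <= 0.
Proof.
have l2 : 0 < ln (2 : R) by rewrite ln_gt0 // ltr1n.
apply: (@le_trans _ _ (\sum_w p w * ((prob_eq p Z (Z w) * qq w /
                 prob_eq p (fun v => (X v, Z v)) (X w, Z w) - 1) / ln 2))).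
  apply: ler_sum => w _.
  have [pw0|pwn] := eqVneq (p w) 0; first by rewrite pw0 !mul0r.
  have pw : 0 < p w by rewrite lt_def pwn p0.
  apply: ler_wpM2l; first exact: p0.
  apply: log2_le_sub; apply: divr_gt0; first apply: mulr_gt0.
  - exact: lt_le_trans pw (prob_ge p0 Z w).
  - by rewrite /qq invr_gt0 ltr0n bin_gt0 Z_le.
  - exact: lt_le_trans pw (prob_ge p0 (fun v => (X v, Z v)) w).
under eq_bigr do rewrite mulrA mulrBr mulr1.
rewrite -mulr_suml pmulr_lle0 ?invr_gt0 // sumrB subr_le0.
rewrite -sum_HH.
rewrite (eq_bigr (fun w => p w * (HH (X w) / prob_eq p X (X w)))); last first.
  by move=> w _; rewrite Cc_eq.
apply: (@group_le R _ p _ X HH) => S; apply: divr_ge0; [exact: prob_ge0 | exact: ler0n].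
Qed.


Lemma log2M (x y : R) : 0 < x -> 0 < y -> log2 (x * y) = log2 x + log2 y.
Proof. by move=> x0 y0; rewrite /log2 lnM ?posrE // mulrDl. Qed.

Lemma bin_le_exp a k : ('C(a, k) <= a ^ k)%N.
Proof.
apply: (@leq_trans ('C(a, k) * k`!)); first by rewrite leq_pmulr ?fact_gt0.
rewrite bin_ffact; elim: k => [|k IH]; first by rewrite ffactn0.
by rewrite ffactnSr expnSr leq_mul // leq_subr.
Qed.

Definition Sl w : R := \sum_(j in Lw w) (#|II w j|)%:R.

Lemma real_core (pw a b c e C s z dd lN Sl : R) :
  0 < pw -> 0 < a -> 0 < b -> 0 < c -> 0 < e -> 0 < C ->
  log2 (a / e) <= - s -> log2 C <= z * (dd + lN) -> s = z * dd - Sl ->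
  pw * log2 (a * b / (c * e)) <= pw * log2 (b * C^-1 / c) + pw * (Sl + z * lN).
Proof.
move=> pw0 a0 b0 c0 e0 C0 K1 K2 K3.
have -> : a * b / (c * e) = (a / e) * (b * C^-1 / c) * C.
  by field; rewrite (gt_eqF C0) (gt_eqF c0) (gt_eqF e0).
have g1 : 0 < a / e by rewrite divr_gt0.
have g2 : 0 < b * C^-1 / c by rewrite divr_gt0 ?mulr_gt0 ?invr_gt0.
rewrite log2M; [| exact: mulr_gt0 | exact: C0].
rewrite log2M //.
rewrite -mulrDr; apply: ler_wpM2l; first exact: ltW.
lra.
Qed.

Lemma K1_gen (a e : R) (s : nat) : 0 < a -> 0 < e -> a * (2 ^ s)%:R <= e ->
  log2 (a / e) <= - s%:R.
Proof.
move=> a0 e0 cm.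
have l2 : 0 < ln (2 : R) by rewrite ln_gt0 // ltr1n.
have H2s : 0 < (2 ^ s)%:R :> R by rewrite ltr0n expn_gt0.
have : a / e <= ((2 ^ s)%:R)^-1.
  by rewrite ler_pdivrMr // mulrC ler_pdivlMr.
rewrite -(ler_ln (x := a / e)) ?posrE ?divr_gt0 ?invr_gt0 // => Hle.
have : log2 (a / e) <= ln (((2 ^ s)%:R)^-1) / ln 2 by rewrite /log2 ler_pM2r ?invr_gt0.
have Eln : ln (((2 ^ s)%:R : R)^-1) = - (ln 2 * s%:R).
  by rewrite lnV ?posrE // natrX lnXn ?ltr0n // mulr_natr.
move=> H; apply: le_trans H _; by rewrite Eln mulNr mulrC mulrA mulVf ?(gt_eqF l2) // mul1r lexx.
Qed.

Lemma K2_gen (k : nat) : (k <= MM)%N ->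
  log2 (('C(MM, k))%:R : R) <= k%:R * (d%:R + log2 N%:R).
Proof.
move=> kM.
have l2 : 0 < ln (2 : R) by rewrite ln_gt0 // ltr1n.
have C0 : 0 < ('C(MM, k))%:R :> R by rewrite ltr0n bin_gt0.
have HM : ('C(MM, k))%:R <= (MM%:R) ^+ k :> R by rewrite -natrX ler_nat bin_le_exp.
have MM0 : 0 < MM%:R :> R by rewrite ltr0n /MM muln_gt0 expn_gt0 HN.
have : ln ('C(MM, k))%:R <= ln ((MM%:R) ^+ k :> R) by rewrite ler_ln ?posrE ?exprn_gt0.
rewrite lnXn // /MM natrM lnM ?posrE ?ltr0n ?expn_gt0 ?HN // natrX lnXn ?ltr0n //.
move=> H; rewrite /log2 ler_pdivrMr // (le_trans H) //.
rewrite -[ln 2 *+ d](mulr_natr (ln 2)) -[_ *+ k]mulr_natr.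
rewrite le_eqVlt; apply/orP; left; apply/eqP; field.
rewrite gt_eqF // ln_gt0 //; lra.
Qed.

Lemma pointwise w :
  p w * log2 ((prob_eq p (fun v => (X v, Y v, Z v)) (X w, Y w, Z w) * prob_eq p Z (Z w)) /
     (prob_eq p (fun v => (X v, Z v)) (X w, Z w) * prob_eq p (fun v => (Y v, Z v)) (Y w, Z w)))
  <= p w * log2 (prob_eq p Z (Z w) * qq w / prob_eq p (fun v => (X v, Z v)) (X w, Z w))
     + p w * (Sl w + (Z w)%:R * log2 N%:R).
Proof.
have [pw0|pwn] := eqVneq (p w) 0; first by rewrite pw0 !mul0r addr0.
have pw : 0 < p w by rewrite lt_def pwn p0.
have a0 := lt_le_trans pw (prob_ge p0 (fun v => (X v, Y v, Z v)) w).
have b0 := lt_le_trans pw (prob_ge p0 Z w).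
have c0 := lt_le_trans pw (prob_ge p0 (fun v => (X v, Z v)) w).
have e0 := lt_le_trans pw (prob_ge p0 (fun v => (Y v, Z v)) w).
have C0 : 0 < ('C(MM, Z w))%:R :> R by rewrite ltr0n bin_gt0 Z_le.
have K1 := K1_gen a0 e0 (count_main p0 w).
have K3 : (#|Cset w|)%:R = (Z w)%:R * d%:R - Sl w :> R.
  have := card_Cset w; rewrite -Z_Lw => /(congr1 (fun k => k%:R : R)).
  rewrite natrD natrM natr_sum => <-; rewrite /Sl; lra.
exact: (real_core pw a0 b0 c0 e0 C0 K1 (K2_gen (Z_le w)) K3).
Qed.

Definition Gj (j : 'I_N) (a : {ffun 'I_N -> 'I_m}) (e : {ffun 'I_n -> 'I_N * {ffun 'I_d -> bool}}) : R :=
  if #|[set t | (e t).1 == j]| == 1%N then 1 else 0.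

Lemma Sl_E w : Sl w = \sum_j Gj j w.1.1 w.2 * #|(w.1.2 j).1|%:R.
Proof.
rewrite /Sl big_mkcond; apply: eq_bigr => j _; rewrite Lw_mem /Gj.
by case: ifP => _; rewrite ?mul1r ?mul0r.
Qed.

Lemma Z_E w : (Z w)%:R = \sum_j Gj j w.1.1 w.2 * 1.
Proof.
rewrite Z_Lw -sum1_card natr_sum big_mkcond; apply: eq_bigr => j _.
rewrite Lw_mem /Gj; by case: ifP => _; rewrite ?mulr1.
Qed.

Lemma ESl : \sum_w p w * Sl w = rho * d%:R * \sum_w p w * (Z w)%:R.
Proof.
under eq_bigr do rewrite Sl_E big_distrr /=.
under [in RHS]eq_bigr do rewrite Z_E big_distrr /=.
rewrite exchange_big [in RHS]exchange_big /= big_distrr /=.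
apply: eq_bigr => j _; exact: indepI.
Qed.

Lemma mu1_E : hc_mu1 n N d rho pi * n%:R = \sum_w p w * (Z w)%:R.
Proof.
rewrite /hc_mu1 /expect.
have [n0|nn] := eqVneq n 0%N.
  rewrite (_ : n%:R = 0 :> R); last by rewrite [X in X%:R]n0.
  rewrite mulr0 big1 // => w _.
  by move: (Z_le_n w); rewrite [X in (_ <= X)%N]n0 leqn0 => /eqP ->; rewrite mulr0.
by rewrite divfK // pnatr_eq0.
Qed.

Theorem main_bound :
  cond_mutual_info p X Y Z
  <= hc_mu1 n N d rho pi * n%:R * (rho * d%:R)
     + hc_mu1 n N d rho pi * n%:R * log2 N%:R.
Proof.
rewrite mu1_E /cond_mutual_info.
apply: le_trans.
  by apply: ler_sum => w _; exact: pointwise w.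
rewrite big_split /=.
apply: le_trans; first by apply: lerD; [exact: gibbs | exact: lexx].
rewrite add0r.
under eq_bigr do rewrite mulrDr.
rewrite big_split /= ESl.
rewrite [X in _ + X <= _](_ : _ = (\sum_w p w * (Z w)%:R) * log2 N%:R).
  by rewrite [rho * _ * _]mulrC.
by rewrite big_distrl /=; apply: eq_bigr => w _; rewrite mulrA.
Qed.

End Final.

Theorem lemma4p1 (R : realType) (n N d : nat) (rho : R) (pi : seq R) :
  (0 < N)%N -> (0 < size pi)%N -> all (fun x => 0 < x) pi ->
  0 <= rho <= 1 ->
  cond_mutual_info (@hc_mass R n N d rho pi) (@hc_XS R n N d pi)
    (@hc_P R n N d pi) (@hc_K R n N d pi)
  <= @hc_mu1 R n N d rho pi * n%:R * (rho * d%:R)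
     + @hc_mu1 R n N d rho pi * n%:R * log2 N%:R.
Proof.
move=> HN Hm Hpi Hrho; exact: (@main_bound R n N d rho pi HN Hpi Hrho).
Qed.
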